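(* Let $h$ be a bilinear form on $V$. Then: (1) for $0\leq p\leq n$, $*\Big(\frac{g^{n-p}h^p}{(n-p)!\,p!}\Big)=i_{\frac{h^p}{p!}}\Big(\frac{g^p}{p!}\Big)$; (2) for $0\leq p\leq n-1$, $*\Big(\frac{g^{n-p-1}h^p}{(n-p-1)!\,p!}\Big)=i_{\frac{h^p}{p!}}\Big(\frac{g^{p+1}}{(p+1)!}\Big)$; (3) more generally, for integers $r\geq 0$ and $0\leq p\leq n-r$, $*\Big(\frac{g^{n-p-r}h^p}{(n-p-r)!\,p!}\Big)=i_{\frac{h^p}{p!}}\Big(\frac{g^{p+r}}{(p+r)!}\Big)$.
   Context: $(V,g)$ is an oriented Euclidean real vector space of dimension $n$. Double forms: elements of $\bigoplus_{p,q}\Lambda^pV^*\otimes\Lambda^qV^*$, a $(p,q)$ double form viewed as a bilinear form on $\Lambda^pV\times\Lambda^qV$, with the inner product induced by $g$ (for an orthonormal basis, the $e_I^*\otimes e_J^*$ with strictly increasing multi-indices are orthonormal). Exterior product: $(\theta_1\otimes\theta_2)(\theta_3\otimes\theta_4)=(\theta_1\wedge\theta_3)\otimes(\theta_2\wedge\theta_4)$; $g$ and $h$ are $(1,1)$ double forms and powers are for this product ($h^0=g^0=1$). $i_\psi$ is the adjoint of left exterior multiplication by $\psi$. The double Hodge star sends a $(p,q)$ double form $\omega$ to the $(n-p,n-q)$ double form $*\omega(u_1,u_2)=(-1)^{(p+q)(n-p-q)}\omega( *u_1,*u_2)$, with $*$ the usual Hodge star of $\Lambda V$. *)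

(* Defs.v *)
(* Double forms on an oriented Euclidean space V of dim n,
   written in coordinates w.r.t. a fixed positively oriented orthonormal
   basis e_0,...,e_{n-1}.  A double form is the family of its coefficients
   w(I,J) on the orthonormal basis e_I^* (x) e_J^* (I, J subsets of 'I_n,
   i.e. strictly increasing multi-indices), so w(I,J) = w(e_I, e_J). *)
From HB Require Import structures.
From mathcomp Require Import all_boot all_order all_algebra.
Set Implicit Arguments. Unset Strict Implicit. Unset Printing Implicit Defensive.
Import Order.TTheory GRing.Theory Num.Theory.
Local Open Scope ring_scope.

Notation dform n R := {ffun {set 'I_n} * {set 'I_n} -> R}.

Section DoubleForms.
Variables (R : fieldType) (n : nat).

(* sign of e_I /\ e_K = sgnp I K e_{I u K}  (I, K disjoint) *)
Definition sgnp (I K : {set 'I_n}) : R :=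
  (-1) ^+ #|[set x : 'I_n * 'I_n | [&& x.1 \in I, x.2 \in K & (val x.2 < val x.1)%N]]|.

Definition dscale (k : R) (w : dform n R) : dform n R :=
  [ffun AB : {set 'I_n} * {set 'I_n} => k * w AB].

Definition dbasis (K L : {set 'I_n}) : dform n R := [ffun AB : {set 'I_n} * {set 'I_n} => (AB == (K, L))%:R].

(* exterior product of double forms:
   (t1 (x) t2)(t3 (x) t4) = (t1 /\ t3) (x) (t2 /\ t4) *)
Definition dmul (w t : dform n R) : dform n R :=
  [ffun AB : {set 'I_n} * {set 'I_n} => \sum_(I : {set 'I_n} | I \subset AB.1)
              \sum_(J : {set 'I_n} | J \subset AB.2)
      sgnp I (AB.1 :\: I) * sgnp J (AB.2 :\: J) * w (I, J) * t (AB.1 :\: I, AB.2 :\: J)].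

Definition done : dform n R := dbasis set0 set0.

Definition dpow (w : dform n R) (p : nat) : dform n R := iter p (dmul w) done.

Definition gform : dform n R := \sum_(i < n) dbasis [set i] [set i].

(* the (1,1) double form of a bilinear form h, h i j = h(e_i, e_j) *)
Definition hform (h : 'M[R]_n) : dform n R :=
  \sum_(i < n) \sum_(j < n) dscale (h i j) (dbasis [set i] [set j]).

(* inner product induced by g: the e_I^* (x) e_J^* are orthonormal *)
Definition ddot (w t : dform n R) : R := \sum_(AB : {set 'I_n} * {set 'I_n}) w AB * t AB.

(* i_psi = adjoint of left exterior multiplication by psi *)
Definition dint (psi w : dform n R) : dform n R :=
  [ffun KL : {set 'I_n} * {set 'I_n} => ddot w (dmul psi (dbasis KL.1 KL.2))].

Definition hsign (p q : nat) : R :=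
  exprz (-1) ((p%:Z + q%:Z) * (n%:Z - p%:Z - q%:Z)).

(* double Hodge star, applied componentwise: for a (p,q) component,
   ( *w)(e_K, e_L) = (-1)^{(p+q)(n-p-q)} w( *e_K, *e_L ),
   with *e_K = sgnp K (~: K) e_{~: K}  (p = |~:K|, q = |~:L|). *)
Definition dstar (w : dform n R) : dform n R :=
  [ffun KL : {set 'I_n} * {set 'I_n} => hsign #|~: KL.1| #|~: KL.2|
              * sgnp KL.1 (~: KL.1) * sgnp KL.2 (~: KL.2) * w (~: KL.1, ~: KL.2)].

End DoubleForms.

(* Main.v *)
Require Import Defs.
From HB Require Import structures.
From mathcomp Require Import all_boot all_order all_algebra ring zify.
Set Implicit Arguments. Unset Strict Implicit. Unset Printing Implicit Defensive.
Import Order.TTheory GRing.Theory Num.Theory.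
Local Open Scope ring_scope.

Section Aux.
Variables (R : realFieldType) (n : nat).
Notation sgn := (sgnp R).
Implicit Types (X Y Z A K L I J : {set 'I_n}).

Lemma sign_sq (a : nat) : (-1) ^+ a * (-1) ^+ a = 1 :> R.
Proof. by rewrite -exprD addnn -mul2n exprM expr2 mulrNN mulr1 expr1n. Qed.

Lemma sgnp_sq X Y : sgn X Y * sgn X Y = 1.
Proof. exact: sign_sq. Qed.

Definition invs X Y := [set x : 'I_n * 'I_n | [&& x.1 \in X, x.2 \in Y & (val x.2 < val x.1)%N]].
Lemma sgnpE X Y : sgn X Y = (-1) ^+ #|invs X Y|.
Proof. by []. Qed.

Lemma sgnpU2 X Y Z : [disjoint Y & Z] -> sgn X (Y :|: Z) = sgn X Y * sgn X Z.
Proof.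
move=> dYZ; rewrite !sgnpE -exprD.
have -> : invs X (Y :|: Z) = invs X Y :|: invs X Z.
  by apply/setP => x; rewrite /invs !inE; case: (x.1 \in X); case: (x.2 \in Y); case: (x.2 \in Z); case: (_ < _)%N.
rewrite -cardsUI.
suff -> : invs X Y :&: invs X Z = set0 by rewrite cards0 addn0.
apply/setP => x; rewrite /invs !inE.
case Hy: (x.2 \in Y); case Hz: (x.2 \in Z); rewrite ?andbF ?andFb //=.
by move/disjointFr: dYZ => /(_ _ Hy); rewrite Hz.
Qed.

Lemma sgnpU1 X Y Z : [disjoint X & Y] -> sgn (X :|: Y) Z = sgn X Z * sgn Y Z.
Proof.
move=> dXY; rewrite !sgnpE -exprD.
have -> : invs (X :|: Y) Z = invs X Z :|: invs Y Z.
  by apply/setP => x; rewrite /invs !inE; case: (x.1 \in X); case: (x.1 \in Y); case: (x.2 \in Z); case: (_ < _)%N.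
rewrite -cardsUI.
suff -> : invs X Z :&: invs Y Z = set0 by rewrite cards0 addn0.
apply/setP => x; rewrite /invs !inE.
case Hy: (x.1 \in X); case Hz: (x.1 \in Y); rewrite ?andbF ?andFb //=.
by move/disjointFr: dXY => /(_ _ Hy); rewrite Hz.
Qed.

Lemma sgnpC X Y : [disjoint X & Y] -> sgn X Y * sgn Y X = (-1) ^+ (#|X| * #|Y|).
Proof.
move=> dXY; rewrite !sgnpE -exprD.
pose sw := fun x : 'I_n * 'I_n => (x.2, x.1).
have swi : injective sw by move=> [a b] [c d] [-> ->].
rewrite -(card_preimset (invs Y X) swi) -cardsX -cardsUI.
have -> : invs X Y :&: sw @^-1: invs Y X = set0.
  apply/setP => x; rewrite /invs !inE /=.
  by case: ltngtP; rewrite ?andbF.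
rewrite cards0 addn0.
suff -> : invs X Y :|: sw @^-1: invs Y X = setX X Y by [].
apply/setP => x; rewrite /invs !inE /=.
case Hx: (x.1 \in X); case Hy: (x.2 \in Y) => //=; rewrite ?andbF //.
case: ltngtP => // e.
by move/disjointFr: dXY => /(_ _ Hx); rewrite -(val_inj e) Hy.
Qed.

Lemma disjE X Y : (forall x, x \in X -> x \in Y -> False) -> [disjoint X & Y].
Proof.
move=> H; rewrite -setI_eq0; apply/eqP/setP => x; rewrite !inE.
by apply/negbTE/negP => /andP [] /H H1 /H1.
Qed.

Lemma sgn_key A K : K \subset A ->
  sgn K (~:K) * sgn (~:A) (A:\:K) =
  (-1)^+(#|K| * (#|~:A| + #|A:\:K|)) * sgn (~:A) A * sgn (A:\:K) K.
Proof.
move=> /subsetP KA.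
have d1 : [disjoint ~:A & A:\:K] by apply: disjE => x; rewrite !inE => /negbTE -> /andP[].
have d2 : [disjoint A:\:K & K] by apply: disjE => x; rewrite !inE => /andP[] /negbTE ->.
have d3 : [disjoint K & ~:A] by apply: disjE => x; rewrite !inE => /KA ->.
have d4 : [disjoint K & A:\:K] by apply: disjE => x; rewrite !inE => -> /andP[].
have e1 : ~:K = ~:A :|: (A:\:K).
  apply/setP => x; rewrite !inE; case Hx: (x \in K); first by rewrite (KA _ Hx).
  by case: (x \in A).
have e2 : A = (A:\:K) :|: K.
  apply/setP => x; rewrite !inE; case Hx: (x \in K); first by rewrite (KA _ Hx) orbT.
  by rewrite orbF.
have E : sgn (~:A) A = sgn (~:A) (A:\:K) * sgn (~:A) K by rewrite -(sgnpU2 _ d2) -e2.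
rewrite e1 (sgnpU2 _ d1) E mulnDr exprD -(sgnpC d3) -(sgnpC d4).
have Hb := sgnp_sq (~:A) K; have Hd := sgnp_sq (A:\:K) K.
set a := sgn K (~:A); set b := sgn (~:A) K; set c := sgn K (A:\:K); set d := sgn (A:\:K) K.
set e := sgn (~:A) (A:\:K).
transitivity (a*c*e*(b*b)*(d*d)); first by rewrite Hb Hd !mulr1.
ring.
Qed.

Lemma sum_cond (T : finType) (P : pred T) (F : T -> R) :
  \sum_(i | P i) F i = \sum_i (P i)%:R * F i.
Proof. rewrite big_mkcond; apply: eq_bigr => i _; by case: (P i); rewrite ?mul1r ?mul0r. Qed.

Lemma sum_collapse (T : finType) (X : T) (F : T -> R) : \sum_i (X == i)%:R * F i = F X.
Proof.
rewrite (bigD1 X) //= eqxx mul1r big1 ?addr0 // => i /negbTE.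
by rewrite eq_sym => ->; rewrite mul0r.
Qed.

Lemma gval I J : gform R n (I,J) = (I == J)%:R * (#|I| == 1%N)%:R.
Proof.
rewrite /gform sum_ffunE.
case: (boolP ((I == J) && (#|I| == 1%N))) => [/andP[/eqP E /cards1P[i E2]]|H].
  subst J; subst I; rewrite eqxx mul1r cards1 eqxx (bigD1 i) //= ffunE eqxx big1 ?addr0 //.
  move=> j ji; rewrite ffunE xpair_eqE andbb.
  by case: eqP => // /set1_inj E; rewrite E eqxx in ji.
rewrite big1.
  by move: H; case: (I == J); case: (#|I| == 1%N); rewrite /= ?mulr0 ?mul0r.
move=> i _; rewrite ffunE xpair_eqE.
case E: (_ && _) => //=; move/andP: E => [/eqP EI /eqP EJ].
by move: H; rewrite EI EJ eqxx cards1.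
Qed.

Lemma card_sing A : #|[set I : {set 'I_n} | (I \subset A) && (#|I| == 1%N)]| = #|A|.
Proof.
rewrite -(card_imset A set1_inj); congr #|pred_of_set _|; apply/setP => I; rewrite inE.
apply/andP/imsetP => [[sIA /cards1P[i Ei]]|[i iA ->]].
  by exists i => //; move/subsetP: sIA; apply; rewrite Ei set11.
by rewrite sub1set iA cards1.
Qed.

Lemma setD_eq (A B I : {set 'I_n}) : I \subset A -> I \subset B -> (A :\: I == B :\: I) = (A == B).
Proof.
move=> IA IB; apply/eqP/eqP => [E|->] //.
have eA : I :|: (A :\: I) = A by rewrite -{1}(setIidPr IA) setID.
have eB : I :|: (B :\: I) = B by rewrite -{1}(setIidPr IB) setID.
by rewrite -eA -eB E.
Qed.

Lemma gpowE k A B : dpow (gform R n) k (A,B) = k`!%:R * (A == B)%:R * (#|A| == k)%:R.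
Proof.
elim: k A B => [|k IH] A B.
  rewrite /dpow /= /done ffunE xpair_eqE cards_eq0 mul1r.
  by case: (A =P set0) => [->|]; case: (B =P set0) => [->|]; rewrite ?eqxx /= ?mulr1 ?mulr0 ?mul0r //;
    move=> nB; case: eqP => // E; case: nB; rewrite -E.
rewrite /dpow iterS -/(dpow _ k) ffunE /= sum_cond.
under eq_bigr => I _ do rewrite sum_cond.
under eq_bigr => I _.
  rewrite (eq_bigr (fun J => (I == J)%:R * ((J \subset B)%:R * (sgnp R I (A :\: I) * sgnp R J (B :\: J)
         * (#|I| == 1%N)%:R * dpow (gform R n) k (A :\: I, B :\: J))))); last first.
    by move=> J _; rewrite gval; ring.
  rewrite sum_collapse IH.
  over.
rewrite (eq_bigr (fun I => (A == B)%:R * (#|A| == k.+1)%:R * k`!%:R * ((I \subset A) && (#|I| == 1%N))%:R)); last first.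
  move=> I _.
  case IA: (I \subset A); last by rewrite /= !mul0r mulr0.
  case I1: (#|I| == 1%N); last by rewrite /= !(mulr0, mul0r).
  case IB: (I \subset B); last first.
    case: (A =P B) => [E|NE]; first by rewrite -E IA in IB.
    by rewrite /= !(mulr0, mul0r).
  rewrite setD_eq //.
  case: (A =P B) => [E|]; last by rewrite /= !(mulr0, mul0r).
  subst B; rewrite (cardsDS IA) (eqP I1) /=.
  have A1 : (1 <= #|A|)%N by rewrite -(eqP I1) subset_leq_card.
  have -> : (#|A| - 1 == k)%N = (#|A| == k.+1)%N.
    by case: #|A| A1 => // m _; rewrite subSS subn0 eqSS.
  rewrite !mul1r mulr1 !mulrA sgnp_sq mul1r; ring.
rewrite -mulr_sumr.
have -> : \sum_(I : {set 'I_n}) ((I \subset A) && (#|I| == 1%N))%:R = #|A|%:R :> R.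
  rewrite -card_sing -sumr_const big_mkcond /=.
  by rewrite [RHS]big_mkcond; apply: eq_bigr => I _; rewrite !inE; case: (_ && _).
case: (A == B); rewrite /= ?(mulr0, mul0r, mul1r, mulr1) //.
move: #|A| => m; case: (m =P k.+1) => [->|]; rewrite /= ?(mulr0, mul0r, mul1r, mulr1) //.
by rewrite factS natrM mulrC.
Qed.

Definition homog (a b : nat) (w : dform n R) :=
  forall I J, w (I,J) != 0 -> #|I| = a /\ #|J| = b.

Lemma homog_dmul a b c d w t : homog a b w -> homog c d t -> homog (a+c) (b+d) (dmul w t).
Proof.
move=> hw ht A B Hs.
have [/andP[/eqP -> /eqP ->]|Hn] := boolP ((#|A| == a + c) && (#|B| == b + d)); first by [].
move: Hs; rewrite ffunE /= big1 ?eqxx // => I IA; rewrite big1 // => J JB.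
case: (boolP (w (I,J) == 0)) => [/eqP ->|/hw [cI cJ]]; first by rewrite mulr0 mul0r.
case: (boolP (t (A:\:I, B:\:J) == 0)) => [/eqP ->|/ht [cAI cBJ]]; first by rewrite mulr0.
exfalso; move/negP: Hn; apply.
by rewrite -(cardsID I A) -(cardsID J B) (setIidPr IA) (setIidPr JB) cI cJ cAI cBJ !eqxx.
Qed.

Lemma homog_H (h : 'M[R]_n) : homog 1 1 (hform h).
Proof.
move=> I J; rewrite /hform sum_ffunE.
have [/andP[/eqP -> /eqP ->]|Hn] := boolP ((#|I| == 1%N) && (#|J| == 1%N)); first by [].
rewrite big1 ?eqxx // => i _; rewrite sum_ffunE big1 // => j _.
rewrite !ffunE xpair_eqE.
case E: (_ && _); last by rewrite mulr0.
by move/andP: E Hn => [/eqP -> /eqP ->]; rewrite !cards1.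
Qed.

Lemma homog_pow (h : 'M[R]_n) p : homog p p (dpow (hform h) p).
Proof.
elim: p => [|p IH].
  move=> I J; rewrite /dpow /= /done ffunE xpair_eqE.
  by case: (I =P set0) => [->|]; case: (J =P set0) => [->|]; rewrite ?cards0 //= ?andbF ?eqxx.
exact: (homog_dmul (@homog_H h) IH).
Qed.

Lemma sum_pair (F : {set 'I_n} * {set 'I_n} -> R) :
  \sum_AB F AB = \sum_A \sum_B F (A,B).
Proof. by rewrite pair_bigA; apply: eq_bigr => -[]. Qed.

Lemma coll_sub (A K : {set 'I_n}) (F : {set 'I_n} -> R) :
  \sum_(I : {set 'I_n}) (I \subset A)%:R * ((A:\:I == K)%:R * F I) = (K \subset A)%:R * F (A:\:K).
Proof.
case KA: (K \subset A).
  rewrite mul1r -sum_collapse; apply: eq_bigr => I _.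
  case IA: (I \subset A).
    have -> : (A :\: I == K) = (A :\: K == I).
      by apply/eqP/eqP => <-; rewrite setDDr setDv set0U; apply/setIidPr; rewrite ?KA ?IA.
    by rewrite mul1r.
  rewrite mul0r; case: (A :\: K =P I) => [E|]; last by rewrite mul0r.
  by rewrite -E subsetDl in IA.
rewrite mul0r big1 // => I _.
case IA: (I \subset A); last by rewrite mul0r.
case: eqP => [E|]; last by rewrite mul0r mulr0.
by rewrite -E subsetDl in KA.
Qed.

Lemma CDC (A K : {set 'I_n}) : ~:K :\: ~:A = A :\: K.
Proof. by rewrite !setDE setCK setIC. Qed.

Lemma hsign_eq a : hsign R n a a = 1.
Proof.
rewrite /hsign.
have -> : (a%:Z + a%:Z) * (n%:Z - a%:Z - a%:Z) = 2%:Z * (a%:Z * (n%:Z - a%:Z - a%:Z)) by ring.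
rewrite -exprz_exp.
have -> : ((-1 : R) ^ 2%:Z) = 1 by rewrite -exprnP expr2 mulrNN mulr1.
by rewrite exp1rz.
Qed.

Lemma natr_andb (a b : bool) : (a && b)%:R = a%:R * b%:R :> R.
Proof. by case: a; case: b; rewrite /= ?(mulr1, mulr0). Qed.

Lemma setDD (A L : {set 'I_n}) : L \subset A -> A :\: (A :\: L) = L.
Proof. by move=> LA; rewrite setDDr setDv set0U; apply/setIidPr. Qed.

Lemma main_gen (k p m : nat) (Phi : dform n R) : homog p p Phi -> (k + m = n)%N ->
  dstar (dscale ((k`! * p`!)%:R^-1) (dmul (dpow (gform R n) k) Phi))
  = dint (dscale (p`!%:R^-1) Phi) (dscale (m`!%:R^-1) (dpow (gform R n) m)).
Proof.
move=> hP kmn; apply/ffunP => -[K L]; rewrite !ffunE /=.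
rewrite sum_cond; under eq_bigr => I _ do rewrite sum_cond.
under eq_bigr => I _.
  rewrite (eq_bigr (fun J => (I == J)%:R * ((J \subset ~:L)%:R * (sgnp R I (~:K:\:I)
     * sgnp R J (~:L:\:J) * k`!%:R * (#|I| == k)%:R * Phi (~:K:\:I, ~:L:\:J))))); last first.
    by move=> J _; rewrite gpowE; ring.
  rewrite sum_collapse.
  over.
rewrite !mulr_sumr (reindex_inj (@setC_inj _)) /=.
pose T A := (K \subset A)%:R * ((L \subset A)%:R * ((#|A| == m)%:R *
   (sgnp R (A:\:K) K * sgnp R (A:\:L) L * (p`!%:R^-1 * Phi (A:\:K, A:\:L))))).
transitivity (\sum_A T A).
  apply: eq_bigr => A _; rewrite /T !setCS !CDC.
  have cA : (#|~:A| == k) = (#|A| == m).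
    have := cardsC A; rewrite card_ord => H; apply/eqP/eqP => ?; lia.
  rewrite cA.
  case KA: (K \subset A); last by rewrite !(mulr0, mul0r).
  case LA: (L \subset A); last by rewrite !(mulr0, mul0r).
  case Am: (#|A| == m); last by rewrite !(mulr0, mul0r).
  case: (boolP (Phi (A:\:K, A:\:L) == 0)) => [/eqP ->|/hP [c1 c2]]; first by rewrite !(mulr0, mul0r).
  have eKL : #|K| = #|L|.
    move: c1 c2; rewrite !cardsDS // => c1 c2.
    have := subset_leq_card KA; have := subset_leq_card LA; lia.
  have eC : #|~:L| = #|~:K|.
    have := cardsC K; have := cardsC L; lia.
  rewrite eC hsign_eq.
  have sk := sgn_key KA; have sl := sgn_key LA.
  rewrite c1 eKL in sk; rewrite c2 in sl.
  transitivity ((sgnp R K (~:K) * sgnp R (~:A) (A:\:K)) * (sgnp R L (~:L) * sgnp R (~:A) (A:\:L))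
     * ((k`!%:R)^-1 * k`!%:R) * (p`!%:R^-1 * Phi (A:\:K, A:\:L))).
    by rewrite natrM invfM /=; ring.
  rewrite sk sl mulVf; last by rewrite pnatr_eq0 -lt0n fact_gt0.
  set E := (-1) ^+ _; set sA := sgnp R (~:A) A.
  transitivity ((E * E) * (sA * sA) * (sgnp R (A :\: K) K * sgnp R (A :\: L) L *
     (p`!%:R^-1 * Phi (A :\: K, A :\: L)))); first by ring.
  by rewrite /E sign_sq sgnp_sq !mul1r.
symmetry; rewrite /ddot sum_pair; apply: eq_bigr => A _.
under eq_bigr => B _ do rewrite !ffunE /= gpowE.
rewrite (bigD1 A) //= [X in _ + X]big1 ?addr0; last first.
  move=> B nBA; rewrite eq_sym in nBA; rewrite (negbTE nBA); by rewrite !(mulr0, mul0r).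
rewrite eqxx.
under eq_bigr => I _ do under eq_bigr => J _ do rewrite !ffunE xpair_eqE natr_andb.
rewrite sum_cond; under eq_bigr => I _ do rewrite sum_cond.
under eq_bigr => I _.
  rewrite (eq_bigr (fun J => (J \subset A)%:R * ((A:\:J == L)%:R * (sgnp R I (A:\:I) * sgnp R J (A:\:J)
     * (p`!%:R^-1 * Phi (I,J)) * (A:\:I == K)%:R)))); last by move=> J _; ring.
  rewrite coll_sub.
  over.
rewrite (eq_bigr (fun I => (I \subset A)%:R * ((A:\:I == K)%:R * ((L \subset A)%:R * (sgnp R I (A:\:I) *
    sgnp R (A:\:L) (A:\:(A:\:L)) * (p`!%:R^-1 * Phi (I,A:\:L))))))); last by move=> I _; ring.
rewrite coll_sub /T.
case KA: (K \subset A); last by rewrite !(mulr0, mul0r).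
case LA: (L \subset A); last by rewrite !(mulr0, mul0r).
rewrite !setDD // mulr1 mulrA mulVf ?mul1r; first by ring.
by rewrite pnatr_eq0 -lt0n fact_gt0.
Qed.
End Aux.

Theorem mainTheorem12 (R : realFieldType) (n : nat) (h : 'M[R]_n) :
  let g := gform R n in
  let H := hform h in
  (forall p : nat, (p <= n)%N ->
     dstar (dscale (((n - p)`! * p`!)%:R^-1) (dmul (dpow g (n - p)) (dpow H p)))
     = dint (dscale (p`!%:R^-1) (dpow H p)) (dscale (p`!%:R^-1) (dpow g p)))
  /\
  (forall p : nat, (p <= n - 1)%N -> (0 < n)%N ->
     dstar (dscale (((n - p - 1)`! * p`!)%:R^-1)
                   (dmul (dpow g (n - p - 1)) (dpow H p)))
     = dint (dscale (p`!%:R^-1) (dpow H p))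
            (dscale ((p + 1)`!%:R^-1) (dpow g (p + 1))))
  /\
  (forall r p : nat, (p <= n - r)%N -> (r <= n)%N ->
     dstar (dscale (((n - p - r)`! * p`!)%:R^-1)
                   (dmul (dpow g (n - p - r)) (dpow H p)))
     = dint (dscale (p`!%:R^-1) (dpow H p))
            (dscale ((p + r)`!%:R^-1) (dpow g (p + r)))).
Proof.
move=> g H.
have P3 : forall r p : nat, (p <= n - r)%N -> (r <= n)%N ->
     dstar (dscale (((n - p - r)`! * p`!)%:R^-1)
                   (dmul (dpow g (n - p - r)) (dpow H p)))
     = dint (dscale (p`!%:R^-1) (dpow H p))
            (dscale ((p + r)`!%:R^-1) (dpow g (p + r))).
  move=> r p hp hr.
  have kmn : (n - p - r + (p + r))%N = n by lia.
  exact: (main_gen (@homog_pow R n h p) kmn).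
split; [|split].
- by move=> p hp; have := P3 0%N p; rewrite subn0 => /(_ hp (leq0n n)); rewrite !subn0 addn0.
- by move=> p hp hn; apply: P3 1%N p hp hn.
- exact: P3.
Qed.
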